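(* For $\mu\in[\frac13,1)$ there exists a solution $f_\mu$ of $$(\mu-1)f_\mu(\xi)-\mu\,\xi f_\mu'(\xi)=f_\mu''(\xi),\qquad \xi\ge 0,$$ such that $f_\mu(0)=0$ and $f_\mu(\xi)\to 0$ as $\xi\to\infty$. This solution is positive, and: if $\mu\in(\frac13,1)$ then $f_\mu(\xi)=O(\xi^{1-\frac1\mu})$ as $\xi\to\infty$; for $\mu=\frac13$, $f_{1/3}(\xi)=\xi e^{-\xi^2/6}$. *)

(* Defs.v *)
From Stdlib Require Import Reals.
From Coquelicot Require Import Coquelicot.
Open Scope R_scope.

(* Main.v *)
Require Import Defs.
From Stdlib Require Import Reals Lra Lia Factorial.
From Coquelicot Require Import Coquelicot.
Open Scope R_scope.

Lemma scal_pow_R (x a : R) k : scal (pow_n x k) a = x ^ k * a.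
Proof. rewrite pow_n_pow. reflexivity. Qed.

Lemma ps_lower (u : nat -> R) x l : is_pseries u x l -> 0 <= x ->
  (forall n, 0 <= u (S n)) -> u O <= l.
Proof.
  intros H Hx Hu.
  assert (Hs: forall N, u O <= sum_n (fun k => scal (pow_n x k) (u k)) N).
  { induction N. rewrite sum_O, scal_pow_R. simpl. lra.
    rewrite sum_Sn, scal_pow_R. change plus with Rplus.
    assert (0 <= x ^ S N * u (S N)) by (apply Rmult_le_pos; [apply pow_le; lra| apply Hu]). lra. }
  assert (HL := is_lim_seq_le (fun _ => u O) _ (u O) l Hs (is_lim_seq_const _) H).
  exact HL.
Qed.

Lemma ps_upper (u : nat -> R) x l : is_pseries u x l -> 0 <= x ->
  (forall n, u (S n) <= 0) -> l <= u O.
Proof.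
  intros H Hx Hu.
  assert (Hs: forall N, sum_n (fun k => scal (pow_n x k) (u k)) N <= u O).
  { induction N. rewrite sum_O, scal_pow_R. simpl. lra.
    rewrite sum_Sn, scal_pow_R. change plus with Rplus.
    assert (0 <= x ^ S N * - u (S N)) by (apply Rmult_le_pos; [apply pow_le; lra| specialize (Hu N); lra]). lra. }
  exact (is_lim_seq_le _ (fun _ => u O) l (u O) Hs H (is_lim_seq_const _)).
Qed.
Fixpoint Ac (c : R) (n : nat) : R :=
  match n with
  | O => 1
  | S k => Ac c k * (c + INR k) / ((3/2 + INR k) * INR (S k))
  end.

Lemma Ac_S c k : Ac c (S k) = Ac c k * (c + INR k) / ((3/2 + INR k) * INR (S k)).
Proof. reflexivity. Qed.

Lemma Ac_rec c k : (3/2 + INR k) * INR (S k) * Ac c (S k) = (c + INR k) * Ac c k.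
Proof.
  rewrite Ac_S. assert (0 <= INR k) by apply pos_INR. rewrite S_INR. field. lra.
Qed.

Lemma Ac_nonneg c n : 0 <= c -> 0 <= Ac c n.
Proof.
  intros Hc. induction n. simpl; lra. rewrite Ac_S.
  assert (0 <= INR n) by apply pos_INR. rewrite S_INR.
  unfold Rdiv. apply Rmult_le_pos. apply Rmult_le_pos; lra.
  left. apply Rinv_0_lt_compat. nra.
Qed.

Lemma Ac_le c n : 0 <= c <= 3/2 -> Ac c n <= / INR (fact n).
Proof.
  intros Hc. induction n. simpl; lra. rewrite Ac_S.
  assert (0 <= INR n) by apply pos_INR.
  assert (Hf: 0 < INR (fact n)) by (apply lt_0_INR; apply lt_O_fact).
  assert (HA := Ac_nonneg c n (proj1 Hc)).
  rewrite fact_simpl, mult_INR, S_INR.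
  rewrite Rinv_mult. unfold Rdiv. rewrite Rinv_mult.
  assert (0 <= (c + INR n) * / (3/2 + INR n) <= 1).
  { split. apply Rmult_le_pos. lra. left; apply Rinv_0_lt_compat; lra.
    apply (Rmult_le_reg_r (3/2 + INR n)). lra. rewrite Rmult_assoc, Rinv_l; lra. }
  assert (0 < / (INR n + 1)) by (apply Rinv_0_lt_compat; lra).
  replace (Ac c n * (c + INR n) * (/ (3 / 2 + INR n) * / (INR n + 1)))
    with (Ac c n * ((c + INR n) * / (3 / 2 + INR n)) * / (INR n + 1)) by ring.
  assert (Ac c n * ((c + INR n) * / (3 / 2 + INR n)) <= / INR (fact n)) by nra.
  nra.
Qed.

Lemma Ac_radius c : 0 <= c <= 3/2 -> CV_radius (Ac c) = p_infty.
Proof.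
  intros Hc.
  assert (HB: CV_radius (fun n => / INR (fact n)) = p_infty).
  { apply CV_radius_infinite_DAlembert.
    - intros n. apply Rinv_neq_0_compat. apply not_0_INR. apply fact_neq_0.
    - apply is_lim_seq_Reals. exact Alembert_exp. }
  assert (Hsub: forall r, (exists M, forall n, Rabs (/ INR (fact n) * r ^ n) <= M) ->
     exists M, forall n, Rabs (Ac c n * r ^ n) <= M).
  { intros r [M HM]. exists M. intros n. eapply Rle_trans; [|apply (HM n)].
    rewrite !Rabs_mult. apply Rmult_le_compat_r. apply Rabs_pos.
    rewrite !Rabs_pos_eq. apply Ac_le; lra.
    left; apply Rinv_0_lt_compat; apply lt_0_INR; apply lt_O_fact.
    apply Ac_nonneg; lra. }
  assert (Hle := is_lub_Rbar_subset _ _ _ _ Hsub (CV_radius_bounded (Ac c)) (CV_radius_bounded (fun n => / INR (fact n)))).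
  rewrite HB in Hle.
  destruct (CV_radius (Ac c)); simpl in Hle; try reflexivity; contradiction.
Qed.

Definition Mf c s := PSeries (Ac c) s.
Definition DMf c s := PSeries (PS_derive (Ac c)) s.
Definition D2Mf c s := PSeries (PS_derive (PS_derive (Ac c))) s.

Lemma ps_all (a : nat -> R) s : CV_radius a = p_infty -> is_pseries a s (PSeries a s).
Proof. intros H. apply PSeries_correct, CV_radius_inside. rewrite H. exact I. Qed.

Lemma rad1 c : 0 <= c <= 3/2 -> CV_radius (PS_derive (Ac c)) = p_infty.
Proof. intros; rewrite CV_radius_derive; apply Ac_radius; auto. Qed.
Lemma rad2 c : 0 <= c <= 3/2 -> CV_radius (PS_derive (PS_derive (Ac c))) = p_infty.
Proof. intros; rewrite !CV_radius_derive; apply Ac_radius; auto. Qed.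

Lemma dM c s : 0 <= c <= 3/2 -> is_derive (Mf c) s (DMf c s).
Proof. intros; apply is_derive_PSeries. rewrite Ac_radius; auto. exact I. Qed.
Lemma d2M c s : 0 <= c <= 3/2 -> is_derive (DMf c) s (D2Mf c s).
Proof. intros; apply is_derive_PSeries. rewrite rad1; auto. exact I. Qed.

Lemma kummer c s : 0 <= c <= 3/2 ->
  s * D2Mf c s + (3/2 - s) * DMf c s - c * Mf c s = 0.
Proof.
  intros Hc.
  assert (E0 := ps_all _ s (Ac_radius c Hc)).
  assert (E1 := ps_all _ s (rad1 c Hc)).
  assert (E2 := ps_all _ s (rad2 c Hc)).
  assert (H := is_pseries_plus _ _ _ _ _
     (is_pseries_plus _ _ _ _ _ (is_pseries_incr_1 _ _ _ E2) (is_pseries_scal (3/2) _ _ _ (Rmult_comm _ _) E1))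
     (is_pseries_plus _ _ _ _ _ (is_pseries_scal (-1) _ _ _ (Rmult_comm _ _) (is_pseries_incr_1 _ _ _ E1))
        (is_pseries_scal (-c) _ _ _ (Rmult_comm _ _) E0))).
  apply is_pseries_ext with (b := fun _ => 0) in H.
  - apply is_pseries_unique in H. rewrite PSeries_const_0 in H.
    unfold Mf, DMf, D2Mf. rewrite H. change plus with Rplus. change scal with Rmult.
    simpl. unfold mult; simpl. ring.
  - intros n. unfold PS_plus, PS_scal, PS_incr_1, PS_derive. change plus with Rplus. change scal with Rmult.
    destruct n as [|k]; unfold mult; cbn -[INR Ac].
    + change (zero : R) with 0. simpl. field.
    + assert (HR := Ac_rec c (S k)). assert (HR2 := Ac_rec c k).
      rewrite !S_INR in *. nra.
Qed.

Lemma M_ge1 c s : 0 <= c <= 3/2 -> 0 <= s -> 1 <= Mf c s.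
Proof.
  intros Hc Hs. assert (E0 := ps_all _ s (Ac_radius c Hc)).
  apply (ps_lower _ _ _ E0 Hs). intros; apply Ac_nonneg; lra.
Qed.

Lemma M_c0 s : 0 <= s -> Mf 0 s = 1.
Proof.
  intros Hs. assert (Hc : 0 <= 0 <= 3/2) by lra.
  assert (E0 := ps_all _ s (Ac_radius 0 Hc)).
  assert (Hz : forall n, Ac 0 (S n) = 0).
  { induction n. rewrite Ac_S. simpl. field. rewrite Ac_S, IHn. unfold Rdiv. ring. }
  apply Rle_antisym.
  - apply (ps_upper _ _ _ E0 Hs). intros n; rewrite Hz; lra.
  - apply (ps_lower _ _ _ E0 Hs). intros n; rewrite Hz; lra.
Qed.

Lemma Phi_le c s : 0 <= c <= 1 -> 0 <= s ->
  s * (DMf c s - Mf c s) + (3/2 - c) * Mf c s <= 3/2 - c.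
Proof.
  intros Hc Hs. assert (Hc' : 0 <= c <= 3/2) by lra.
  assert (E0 := ps_all _ s (Ac_radius c Hc')).
  assert (E1 := ps_all _ s (rad1 c Hc')).
  assert (H := is_pseries_plus _ _ _ _ _
     (is_pseries_incr_1 _ _ _ (is_pseries_plus _ _ _ _ _ E1 (is_pseries_scal (-1) _ _ _ (Rmult_comm _ _) E0)))
     (is_pseries_scal (3/2 - c) _ _ _ (Rmult_comm _ _) E0)).
  apply (ps_upper _ _ _ H) in Hs.
  - unfold Mf, DMf. change plus with Rplus in Hs. change scal with Rmult in Hs.
    unfold mult in Hs; cbn -[INR Ac PSeries] in Hs.
    change (Ac c 0) with 1 in Hs. lra.
  - intros k. unfold PS_plus, PS_scal, PS_incr_1, PS_derive. change plus with Rplus. change scal with Rmult.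
    unfold mult; cbn -[INR Ac].
    assert (HR := Ac_rec c k). assert (HA := Ac_nonneg c k (proj1 Hc)).
    assert (HA1 := Ac_nonneg c (S k) (proj1 Hc)).
    assert (Hk := pos_INR k). rewrite S_INR in *.
    assert (Hpos : 0 < (3/2 + INR k) * (INR k + 1)) by nra.
    assert (Hm : (3/2 + INR k) * (INR k + 1) * ((INR k + 1) * Ac c (S k) + -1 * Ac c k + (3/2 - c) * Ac c (S k)) <= 0).
    { replace ((3/2 + INR k) * (INR k + 1) * ((INR k + 1) * Ac c (S k) + -1 * Ac c k + (3/2 - c) * Ac c (S k)))
        with ((INR k + 1 + (3/2 - c)) * ((3/2 + INR k) * (INR k + 1) * Ac c (S k)) - (3/2 + INR k) * (INR k + 1) * Ac c k) by ring.
      rewrite HR. assert (0 <= (c - 1) * (c - 3/2)) by nra. nra. }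
    nra.
Qed.

Lemma Rpower_pos x y : 0 < Rpower x y.
Proof. unfold Rpower. apply exp_pos. Qed.

Lemma dRpower x y : 0 < x -> is_derive (fun t => Rpower t y) x (y * Rpower x (y - 1)).
Proof. intros; apply is_derive_Reals, derivable_pt_lim_power; auto. Qed.

Lemma decay c s : 0 <= c <= 1 -> 1 <= s ->
  exp (- s) * Mf c s <= (Mf c 1 + 2 * (3/2 - c)) * Rpower s (- (3/2 - c)).
Proof.
  intros Hc Hs. assert (Hc' : 0 <= c <= 3/2) by lra.
  set (a := 3/2 - c).
  set (G := fun x => Rpower x a * exp (- x) * Mf c x + a * (x + 1) * exp (- x)).
  set (G' := fun x => a * Rpower x (a - 1) * exp (- x) * Mf c x + Rpower x a * (- exp (- x)) * Mf c x
     + Rpower x a * exp (- x) * DMf c x + a * exp (- x) - a * (x + 1) * exp (- x)).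
  assert (HD : forall x, 0 < x -> is_derive G x (G' x)).
  { intros x Hx. unfold G, G'. auto_derive.
    - split. eexists; apply dRpower; auto. split; auto. eexists; apply dM; auto.
    - replace (Derive (fun x0 => Rpower x0 a) x) with (a * Rpower x (a - 1)) by (symmetry; apply is_derive_unique; apply dRpower; auto).
      replace (Derive (fun x0 => Mf c x0) x) with (DMf c x) by (symmetry; apply is_derive_unique; apply dM; auto).
      ring. }
  assert (HG'le : forall x, 1 <= x -> G' x <= 0).
  { intros x Hx. unfold G'.
    assert (Hpa : Rpower x a = x * Rpower x (a-1)).
    { replace a with (1 + (a-1)) at 1 by ring. rewrite Rpower_plus, Rpower_1; lra. }
    rewrite Hpa.
    assert (HPhi := Phi_le c x Hc ltac:(lra)). fold a in HPhi.
    assert (Hq : Rpower x (a-1) <= Rpower x 1) by (apply Rle_Rpower; unfold a; lra).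
    rewrite Rpower_1 in Hq by lra.
    assert (Hr := Rpower_pos x (a-1)). assert (He := exp_pos (-x)).
    assert (H1 : Rpower x (a-1) * (x * (DMf c x - Mf c x) + a * Mf c x) <= Rpower x (a-1) * a)
      by (apply Rmult_le_compat_l; lra).
    assert (H2 : Rpower x (a-1) * a <= x * a) by (apply Rmult_le_compat_r; [unfold a; lra | exact Hq]).
    replace (a * Rpower x (a - 1) * exp (- x) * Mf c x + x * Rpower x (a - 1) * - exp (- x) * Mf c x +
      x * Rpower x (a - 1) * exp (- x) * DMf c x + a * exp (- x) - a * (x + 1) * exp (- x))
      with (exp (- x) * (Rpower x (a-1) * (x * (DMf c x - Mf c x) + a * Mf c x) - x * a)) by ring.
    assert (0 <= exp (- x) * (x * a - Rpower x (a-1) * (x * (DMf c x - Mf c x) + a * Mf c x))) by (apply Rmult_le_pos; lra).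
    lra. }
  assert (HM := MVT_gen G 1 s G'). cbv zeta in HM.
  rewrite Rmin_left, Rmax_right in HM by lra.
  destruct HM as [y [Hy HM]].
  { intros x Hx. apply HD. lra. }
  { intros x Hx. apply derivable_continuous_pt. exists (G' x). apply is_derive_Reals. apply HD. lra. }
  assert (Hy' := HG'le y (proj1 Hy)).
  assert (HGs : G s <= G 1) by nra.
  assert (HG1 : G 1 <= Mf c 1 + 2 * a).
  { unfold G. unfold Rpower at 1. rewrite ln_1, Rmult_0_r, exp_0.
    assert (exp (Ropp 1) < 1) by (apply Rlt_le_trans with (exp 0); [apply exp_increasing; lra | rewrite exp_0; lra]).
    assert (0 < exp (Ropp 1)) by apply exp_pos.
    assert (HM1 := M_ge1 c 1 Hc' ltac:(lra)).
    assert (0 < a) by (unfold a; lra).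
    assert (exp (Ropp 1) * Mf c 1 <= 1 * Mf c 1) by (apply Rmult_le_compat_r; lra).
    assert (a * exp (Ropp 1) <= a * 1) by (apply Rmult_le_compat_l; lra).
    lra. }
  assert (HR := Rpower_pos s a). assert (He := exp_pos (-s)).
  assert (HMs := M_ge1 c s Hc' ltac:(lra)).
  assert (Hmain : Rpower s a * (exp (- s) * Mf c s) <= Mf c 1 + 2 * a).
  { unfold G in HGs, HG1. assert (0 <= a * (s + 1) * exp (- s)) by (unfold a; apply Rmult_le_pos; [apply Rmult_le_pos|]; lra).
    lra. }
  fold a. rewrite Rpower_Ropp.
  apply (Rmult_le_reg_l (Rpower s a)); auto.
  replace (Rpower s a * ((Mf c 1 + 2 * a) * / Rpower s a)) with (Mf c 1 + 2 * a) by (field; lra).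
  exact Hmain.
Qed.

Lemma lim_Rpower e : e < 0 -> is_lim (fun x => Rpower x e) p_infty 0.
Proof.
  intros He. apply (is_lim_ext (fun x => exp (e * ln x))); [intros; reflexivity|].
  apply (is_lim_comp exp (fun x => e * ln x) p_infty 0 m_infty).
  - exact is_lim_exp_m.
  - assert (H := is_lim_scal_l ln e p_infty p_infty is_lim_ln_p).
    replace (Rbar_mult e p_infty) with m_infty in H. exact H.
    simpl. destruct (Rle_dec 0 e); [exfalso; lra|]. reflexivity.
  - exists 0. intros y _ Hy. discriminate.
Qed.

Lemma lim_bound (f : R -> R) C M e : e < 0 ->
  (forall x, M <= x -> 0 <= f x <= C * Rpower x e) -> is_lim f p_infty 0.
Proof.
  intros He H.
  apply (is_lim_le_le_loc (fun _ => 0) (fun x => C * Rpower x e)).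
  - exists M. intros x Hx. apply H; lra.
  - apply is_lim_const.
  - assert (HL := is_lim_scal_l _ C p_infty 0 (lim_Rpower e He)).
    replace (Rbar_mult C 0) with (Finite 0) in HL. exact HL.
    simpl. f_equal; ring.
Qed.

Definition cmu mu := (3 * mu - 1) / (2 * mu).
Definition ff mu xi := xi * exp (- (mu * xi ^ 2 / 2)) * Mf (cmu mu) (mu * xi ^ 2 / 2).
Definition dff mu xi := let s := mu * xi ^ 2 / 2 in let c := cmu mu in
  exp (- s) * (Mf c s + mu * xi ^ 2 * (DMf c s - Mf c s)).
Definition d2ff mu xi := let s := mu * xi ^ 2 / 2 in let c := cmu mu in
  - mu * xi * exp (- s) * (Mf c s + mu * xi ^ 2 * (DMf c s - Mf c s)) +
  exp (- s) * (mu * xi * DMf c s + 2 * mu * xi * (DMf c s - Mf c s) + mu ^ 2 * xi ^ 3 * (D2Mf c s - DMf c s)).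

Lemma cmu_range mu : 1/3 <= mu < 1 -> 0 <= cmu mu <= 1.
Proof.
  intros H. unfold cmu. split.
  - apply Rmult_le_pos. lra. left; apply Rinv_0_lt_compat; lra.
  - apply (Rmult_le_reg_r (2 * mu)). lra. unfold Rdiv. rewrite Rmult_assoc, Rinv_l; lra.
Qed.

Lemma ff_bound mu xi : 1/3 <= mu < 1 -> 3 <= xi ->
  0 <= ff mu xi <= ((Mf (cmu mu) 1 + 2 * (3/2 - cmu mu)) * Rpower (mu/2) (- (3/2 - cmu mu))) * Rpower xi (1 - 1 / mu).
Proof.
  intros Hmu Hxi. assert (Hc := cmu_range mu Hmu).
  set (c := cmu mu) in *. set (s := mu * xi ^ 2 / 2).
  assert (Hx2 : 9 <= xi ^ 2) by nra.
  assert (Hs : 1 <= s) by (unfold s; assert (0 <= (mu - 1/3) * (xi ^ 2 - 9)) by (apply Rmult_le_pos; lra); nra).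
  assert (HM : 1 <= Mf c s) by (apply M_ge1; lra).
  assert (HE := exp_pos (- s)).
  assert (HD := decay c s Hc Hs).
  set (K := Mf c 1 + 2 * (3/2 - c)) in *.
  unfold ff. fold c. fold s.
  split. { apply Rmult_le_pos. apply Rmult_le_pos; lra. lra. }
  assert (Hs2 : Rpower s (- (3/2 - c)) = Rpower (mu/2) (- (3/2 - c)) * Rpower xi (INR 2 * - (3/2 - c))).
  { rewrite <- Rpower_mult, Rpower_pow by lra. rewrite Rpower_mult_distr by nra.
    unfold s. f_equal. field. }
  assert (Hx : xi * Rpower xi (INR 2 * - (3/2 - c)) = Rpower xi (1 - 1 / mu)).
  { rewrite <- (Rpower_1 xi) at 1 by lra. rewrite <- Rpower_plus. f_equal. unfold c, cmu. simpl. field. lra. }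
  rewrite Hs2 in HD. rewrite <- Hx.
  assert (0 <= xi) by lra.
  assert (xi * (exp (- s) * Mf c s) <= xi * (K * (Rpower (mu / 2) (- (3 / 2 - c)) * Rpower xi (INR 2 * - (3 / 2 - c)))))
    by (apply Rmult_le_compat_l; lra).
  lra.
Qed.

Lemma exM c y : 0 <= c <= 3/2 -> ex_derive (fun x => Mf c x) y.
Proof. intros; exists (DMf c y); apply dM; auto. Qed.
Lemma exDM c y : 0 <= c <= 3/2 -> ex_derive (fun x => DMf c x) y.
Proof. intros; exists (D2Mf c y); apply d2M; auto. Qed.
Lemma DerM c y : 0 <= c <= 3/2 -> Derive (fun x => Mf c x) y = DMf c y.
Proof. intros; apply is_derive_unique; apply dM; auto. Qed.
Lemma DerDM c y : 0 <= c <= 3/2 -> Derive (fun x => DMf c x) y = D2Mf c y.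
Proof. intros; apply is_derive_unique; apply d2M; auto. Qed.

Theorem proposition2p1 (mu : R) (Hmu : 1 / 3 <= mu < 1) :
  exists f df d2f : R -> R,
    (* f solves (mu-1) f - mu xi f' = f'' on xi >= 0 *)
    (forall xi, 0 <= xi ->
       is_derive f xi (df xi) /\ is_derive df xi (d2f xi) /\
       (mu - 1) * f xi - mu * xi * df xi = d2f xi) /\
    f 0 = 0 /\
    is_lim f p_infty 0 /\
    (* positivity *)
    (forall xi, 0 < xi -> 0 < f xi) /\
    (* asymptotics for mu in (1/3,1) *)
    (1 / 3 < mu ->
       exists C M : R, 0 < M /\
         forall xi, M <= xi -> Rabs (f xi) <= C * Rpower xi (1 - 1 / mu)) /\
    (* explicit form for mu = 1/3 *)
    (mu = 1 / 3 -> forall xi, 0 <= xi -> f xi = xi * exp (- xi ^ 2 / 6)).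
Proof.
  assert (Hc := cmu_range mu Hmu).
  assert (Hc' : 0 <= cmu mu <= 3/2) by lra.
  exists (ff mu), (dff mu), (d2ff mu).
  split; [|split; [|split; [|split; [|split]]]].
  - intros xi _. split; [|split].
    + unfold ff, dff. auto_derive.
      * repeat (first [apply conj | apply exM; exact Hc' | apply exDM; exact Hc' | exact I]).
      * rewrite DerM by auto.
        replace (mu * (xi * (xi * 1)) * / 2) with (mu * xi ^ 2 / 2) by field.
        set (E := exp (- (mu * xi ^ 2 / 2))). set (M := Mf (cmu mu) (mu * xi ^ 2 / 2)).
        set (D := DMf (cmu mu) (mu * xi ^ 2 / 2)). try set (D2 := D2Mf (cmu mu) (mu * xi ^ 2 / 2)).
        field.
    + unfold dff, d2ff. cbv zeta. auto_derive.
      * split; [apply exM; exact Hc'|split; [apply exDM; exact Hc'|split; [apply exM; exact Hc'|exact I]]].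
      * rewrite !DerM, !DerDM by auto.
        replace (mu * (xi * (xi * 1)) * / 2) with (mu * xi ^ 2 / 2) by field.
        set (E := exp (- (mu * xi ^ 2 / 2))). set (M := Mf (cmu mu) (mu * xi ^ 2 / 2)).
        set (D := DMf (cmu mu) (mu * xi ^ 2 / 2)). try set (D2 := D2Mf (cmu mu) (mu * xi ^ 2 / 2)).
        field.
    + unfold ff, dff, d2ff. cbv zeta.
      set (c := cmu mu) in *. set (s := mu * xi ^ 2 / 2). set (E := exp (- s)).
      set (M := Mf c s). set (D := DMf c s). set (D2 := D2Mf c s).
      assert (K := kummer c s Hc'). fold M D D2 in K.
      assert (Hc2 : 2 * mu * c = 3 * mu - 1) by (unfold c, cmu; field; lra).
      assert (H1 : 2 * mu * (E * xi * (s * D2 + (3 / 2 - s) * D - c * M)) = 0) by (rewrite K; ring).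
      assert (H2 : E * xi * M * (2 * mu * c - 3 * mu + 1) = 0) by (rewrite Hc2; ring).
      unfold s in H1. lra.
  - unfold ff. ring.
  - apply (lim_bound _ ((Mf (cmu mu) 1 + 2 * (3/2 - cmu mu)) * Rpower (mu/2) (- (3/2 - cmu mu))) 3 (1 - 1/mu)).
    + assert (1 < 1 / mu). { apply (Rmult_lt_reg_r mu). lra. field_simplify; lra. } lra.
    + intros x Hx. apply ff_bound; auto.
  - intros xi Hxi. unfold ff. assert (1 <= Mf (cmu mu) (mu * xi ^ 2 / 2)) by (apply M_ge1; auto; nra).
    assert (0 < exp (- (mu * xi ^ 2 / 2))) by apply exp_pos.
    apply Rmult_lt_0_compat. apply Rmult_lt_0_compat; lra. lra.
  - intros _. exists ((Mf (cmu mu) 1 + 2 * (3/2 - cmu mu)) * Rpower (mu/2) (- (3/2 - cmu mu))), 3.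
    split. lra. intros xi Hxi. destruct (ff_bound mu xi Hmu Hxi) as [H0 H1].
    rewrite Rabs_pos_eq; auto.
  - intros Hm xi Hxi. unfold ff.
    assert (Hc0 : cmu mu = 0) by (unfold cmu; rewrite Hm; field).
    rewrite Hc0, M_c0 by nra. rewrite Hm. rewrite Rmult_1_r. f_equal. f_equal. field.
Qed.
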